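(* Let $p$ be an odd prime, $\omega=e^{2\pi i/p}$, $m\ge1$, $Q=T_{(p^m)}$ and $K=K_Q(p)$. Let $M=S_\xi X^b$ and $M'=S_{\xi'}X^{b'}$ be elements of $K$ (with $S_\xi,S_{\xi'}\in Q$, $b,b'\in\mathbb{Z}_p$) such that $[M,M']=\omega^c\mathbbm{1}$ for some $c\in\mathbb{Z}_p$. Then: (1) if $b=b'=0$, then $M,M'\in Q$ and $c=0$; (2) if $b\neq0$ and $b'=0$, then $M'\in T_{(p)}$, and if moreover $c=0$ then $M'\in Z(K)$; (3) if $b\neq0$ and $b'\neq0$, then there exist $a,y\in\mathbb{Z}_p$ and $S_\chi\in T_{(p)}$ such that $\omega^aM'=(MS_\chi)^y$, where $\chi(q)=\omega^{c'q}$ with $c'\in\mathbb{Z}_p$ satisfying $b'c'=-c$, and $yb=b'$; if moreover $c=0$, then $\omega^aM'=M^y$.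
   Context: Let $\{|q\rangle:q\in\mathbb{Z}_p\}$ be the computational basis of $\mathbb{C}^p$ and $X|q\rangle=|q+1\rangle$. For $\xi:\mathbb{Z}_p\to U(1)$ let $S_\xi=\mathrm{diag}(\xi(0),\dots,\xi(p-1))$. $T=\{S_\xi:\prod_{q}\xi(q)=1\}$ and $T_{(p^k)}=\{S\in T:S^{p^k}=\mathbbm{1}\}$. $K_Q(p)$ is the subgroup of $SU(p)$ generated by all $S_\xi X^b$ with $S_\xi\in Q$, $b\in\mathbb{Z}_p$. $Z(K)$ denotes the center of $K$. The commutator is $[A,B]=ABA^{-1}B^{-1}$. *)

(* Defs.v *)
From HB Require Import structures.
From mathcomp Require Import all_boot all_order all_algebra all_field.
Set Implicit Arguments. Unset Strict Implicit. Unset Printing Implicit Defensive.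
Import Order.TTheory GRing.Theory Num.Theory.
Local Open Scope ring_scope.

(* Matrices over algC (algebraic complex numbers), indexed by 'I_p = Z_p. *)

(* omega = e^{2 pi i / p}:  p.-root (-1) is e^{i pi / p} (minimal argument). *)
Definition omega (p : nat) : algC := (p.-root (-1)) ^+ 2.

(* shift X |q> = |q+1>  : entry (i,j) is 1 iff i = j+1 mod p *)
Definition Xmat (p : nat) : 'M[algC]_p :=
  \matrix_(i < p, j < p) ((nat_of_ord i == (j.+1 %% p)%N)%:R).

Definition Smat (p : nat) (xi : 'I_p -> algC) : 'M[algC]_p :=
  diag_mx (\row_q xi q).

Definition inT (p : nat) (S : 'M[algC]_p) : Prop :=
  exists xi : 'I_p -> algC,
    S = Smat xi /\ (forall q, `|xi q| = 1) /\ \prod_(q < p) xi q = 1.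

Definition inTk (p k : nat) (S : 'M[algC]_p) : Prop :=
  inT S /\ S ^+ (p ^ k) = 1%:M.

Inductive inK (p : nat) (Q : 'M[algC]_p -> Prop) : 'M[algC]_p -> Prop :=
| inK_gen (xi : 'I_p -> algC) (b : nat) :
    Q (Smat xi) -> inK Q (Smat xi *m Xmat p ^+ b)
| inK_one : inK Q 1%:M
| inK_mul A B : inK Q A -> inK Q B -> inK Q (A *m B)
| inK_inv A : inK Q A -> inK Q (invmx A).

Definition inZK (p : nat) (Q : 'M[algC]_p -> Prop) (A : 'M[algC]_p) : Prop :=
  inK Q A /\ forall B, inK Q B -> A *m B = B *m A.

Definition commut (p : nat) (A B : 'M[algC]_p) : 'M[algC]_p :=
  A *m B *m invmx A *m invmx B.

Arguments inTk p k S : clear implicits.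

(* Main.v *)
Set Warnings "-notation-overridden,-ambiguous-paths".
Require Import Defs.
From HB Require Import structures.
From mathcomp Require Import all_boot all_order all_algebra all_field.
From mathcomp Require Import ring.
Set Implicit Arguments. Unset Strict Implicit. Unset Printing Implicit Defensive.
Import Order.TTheory GRing.Theory Num.Theory.
Local Open Scope ring_scope.

Section Mon.
Variable n : nat.
Local Notation P := n.+2.
Implicit Types f g : 'I_P -> algC.

Definition mon f (k : 'I_P) : 'M[algC]_P :=
  \matrix_(i, j) (f i * ((i == j + k)%:R)).

Lemma mon_mul f g k l :
  mon f k *m mon g l = mon (fun i => f i * g (i - k)) (k + l).
Proof.
apply/matrixP => i j; rewrite !mxE (bigD1 (i - k)) //= big1 ?addr0.
  rewrite !mxE subrK eqxx mulr1 -mulrA; congr (_ * (_ * _)).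
  by rewrite subr_eq -addrA (addrC l k).
move=> r /negbTE nr; rewrite !mxE.
have -> : (i == r + k) = false by rewrite -subr_eq eq_sym nr.
by rewrite mulr0 mul0r.
Qed.

Lemma mon_inj f g k : mon f k = mon g k -> f =1 g.
Proof.
move=> e i; have := congr1 (fun A : 'M_P => A i (i - k)) e.
by rewrite /= !mxE subrK eqxx !mulr1.
Qed.

Lemma mon_ext f g k : f =1 g -> mon f k = mon g k.
Proof. by move=> e; apply/matrixP => i j; rewrite !mxE e. Qed.

Lemma monZ a f k : a *: mon f k = mon (fun i => a * f i) k.
Proof. by apply/matrixP => i j; rewrite !mxE mulrA. Qed.

Lemma mon1 : mon (fun _ => 1) 0 = 1%:M.
Proof. by apply/matrixP => i j; rewrite !mxE addr0 mul1r. Qed.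

Lemma Smat_mon f : Smat f = mon f 0.
Proof. by apply/matrixP => i j; rewrite !mxE addr0 mulr_natr. Qed.

Lemma X_mon : Xmat P = mon (fun _ => 1) 1.
Proof.
apply/matrixP => i j; rewrite !mxE mul1r; congr (_%:R).
by rewrite -val_eqE /= modnDmr addn1.
Qed.

Lemma Xexp_mon k : Xmat P ^+ k = mon (fun _ => 1) (k%:R).
Proof.
elim: k => [|k IH]; first by rewrite expr0 mon1.
rewrite exprS IH X_mon -mulmxE mon_mul mulrS; apply: mon_ext => i; rewrite mulr1.
by [].
Qed.

Lemma M_mon f (b : 'I_P) : Smat f *m Xmat P ^+ b = mon f b.
Proof.
rewrite Smat_mon Xexp_mon mon_mul add0r natr_Zp.
by apply: mon_ext => i; rewrite mulr1.
Qed.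

Fixpoint powf f (k : 'I_P) m : 'I_P -> algC :=
  match m with 0 => fun _ => 1 | m.+1 => fun i => f i * powf f k m (i - k) end.

Lemma mon_exp f k m : mon f k ^+ m = mon (powf f k m) (k *+ m).
Proof.
elim: m => [|m IH]; first by rewrite expr0 mulr0n mon1.
by rewrite exprS IH -mulmxE mon_mul mulrS; apply: mon_ext.
Qed.

Definition wt f := \prod_i f i.

Lemma wt_shift f k : \prod_i f (i - k) = wt f.
Proof. by rewrite /wt [RHS](reindex_inj (addIr (- k))). Qed.

Lemma wt_powf f k m : wt (powf f k m) = wt f ^+ m.
Proof.
elim: m => [|m IH]; first by rewrite /wt big1.
by rewrite exprS /wt /= big_split /= -IH wt_shift.
Qed.

End Mon.

Section Om.
Variable n : nat.
Local Notation P := n.+2.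

Lemma omega_exp : omega P ^+ P = 1.
Proof.
have rP : (P.-root (-1 : algC)) ^+ P = -1 by rewrite rootCK.
by rewrite /omega -exprM mulnC exprM rP sqrrN expr1n.
Qed.

Lemma omega_prim : prime P -> P.-primitive_root (omega P).
Proof.
move=> pr; set r := P.-root (-1 : algC).
have rP : r ^+ P = -1 by rewrite rootCK.
have rlt : (r < 0) = false by exact: rootC_lt0.
have oE : omega P = r ^+ 2 by [].
clearbody r.
have [m pm mdP] := prim_order_exists (ltn0Sn _) omega_exp.
case/primeP: pr => _ /(_ m mdP) /orP [/eqP m1 | /eqP mP]; last by rewrite mP in pm.
rewrite m1 in pm; have := prim_expr_order pm; rewrite expr1 oE.
move/eqP; rewrite sqrf_eq1 => /orP [/eqP r1 | /eqP rN1].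
  have h : (1 : algC) = -1 by rewrite -rP r1 expr1n.
  have : (2%:R : algC) = 0 by rewrite mulr2n {2}h subrr.
  by move/eqP; rewrite pnatr_eq0.
by rewrite rN1 ltrN10 in rlt.
Qed.

Lemma omega_norm : `|omega P| = 1.
Proof.
have := congr1 Num.norm omega_exp; rewrite normrX normr1 => /eqP.
by rewrite pexpr_eq1 // => /eqP.
Qed.

Lemma omega_neq0 : omega P != 0.
Proof. by rewrite -normr_eq0 omega_norm oner_eq0. Qed.

Lemma sum_ord_odd : odd P -> (\sum_(k < P) k = P * P./2)%N.
Proof.
move=> oP; rewrite -(big_mkord xpredT (fun i => i)) bin2_sum bin2.
by rewrite -(odd_halfK oP) -doubleMr doubleK.
Qed.

Lemma prod_omega e : odd P -> \prod_(k < P) omega P ^+ (e * k) = 1.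
Proof.
move=> oP; rewrite prodrXr -big_distrr /= sum_ord_odd //.
by rewrite mulnCA exprM omega_exp expr1n.
Qed.

End Om.

Section Aux.
Variable n : nat.
Local Notation P := n.+2.

Definition E (x : 'I_P) : algC := omega P ^+ x.

Lemma E_add x y : E (x + y) = E x * E y.
Proof. by rewrite /E -exprD -[in RHS](expr_mod _ (omega_exp n)). Qed.

Lemma E_nat (c' q : 'I_P) : omega P ^+ (c' * q) = E (c' * q).
Proof. by rewrite -(expr_mod (c' * q)%N (omega_exp n)). Qed.

Lemma unit_ord (b : 'I_P) : prime P -> b != 0 -> b \is a GRing.unit.
Proof.
move=> pr nb.
have b0 : (0 < val b)%N.
  rewrite lt0n; apply: contra nb => /eqP h; apply/eqP/val_inj; exact: h.
have h : ((val b)%:R : 'Z_P) \is a GRing.unit.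
  rewrite unitZpE // prime_coprime //.
  by apply/negP => /(dvdn_leq b0); rewrite leqNgt ltn_ord.
by rewrite natr_Zp in h.
Qed.

Lemma iter_shift (b : 'I_P) (phi : 'I_P -> algC) lam :
  (forall i, phi (i - b) = lam * phi i) ->
  forall k i, phi (i - b *+ k) = lam ^+ k * phi i.
Proof.
move=> h; elim=> [|k IH] i; first by rewrite mulr0n subr0 expr0 mul1r.
by rewrite mulrSr opprD addrA h IH exprS mulrA.
Qed.

Lemma reach (b i : 'I_P) : b \is a GRing.unit ->
  i - b *+ ((i * b^-1)%R : 'I_P) = 0.
Proof. by move=> ub; rewrite -mulr_natr natr_Zp mulrCA mulrV // mulr1 subrr. Qed.

Lemma powf_neq0 (f : 'I_P -> algC) k m i :
  (forall j, f j != 0) -> powf f k m i != 0.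
Proof.
move=> nf; elim: m i => [|m IH] i /=; first exact: oner_neq0.
by rewrite mulf_neq0.
Qed.

Lemma powf0 (f : 'I_P -> algC) m i : powf f 0 m i = f i ^+ m.
Proof. by elim: m i => [|m IH] i //=; rewrite subr0 IH exprS. Qed.

Lemma mon_unit (f : 'I_P -> algC) k : (forall j, f j != 0) -> mon f k \in unitmx.
Proof.
move=> nf.
suff h : mon f k *m mon (fun i => (f (i + k))^-1) (-k) = 1%:M.
  by case: (mulmx1_unit h).
rewrite mon_mul subrr -mon1; apply: mon_ext => i; rewrite subrK mulfV //.
Qed.

Lemma Smat_exp (f : 'I_P -> algC) m : Smat f ^+ m = mon (fun i => f i ^+ m) 0.
Proof. by rewrite Smat_mon mon_exp mul0rn; apply: mon_ext => i; rewrite powf0. Qed.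

Lemma prod_const_ord (x : algC) : \prod_(i < P) x = x ^+ P.
Proof. by rewrite prodr_const card_ord. Qed.

End Aux.

Unset Implicit Arguments.
Theorem lemma3 (p m : nat) (xi xi' : 'I_p -> algC) (b b' c : 'I_p)
    (M M' : 'M[algC]_p) :
  prime p -> odd p -> (1 <= m)%N ->
  inTk p m (Smat xi) -> inTk p m (Smat xi') ->
  M = Smat xi *m Xmat p ^+ b -> M' = Smat xi' *m Xmat p ^+ b' ->
  inK (inTk p m) M -> inK (inTk p m) M' ->
  commut M M' = (omega p ^+ c)%:M ->
  [/\
    (* (1) *)
    (nat_of_ord b = 0%N -> nat_of_ord b' = 0%N ->
       [/\ inTk p m M, inTk p m M' & nat_of_ord c = 0%N]),
    (* (2) *)
    (nat_of_ord b <> 0%N -> nat_of_ord b' = 0%N ->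
       inTk p 1 M' /\ (nat_of_ord c = 0%N -> inZK (inTk p m) M')) &
    (* (3) *)
    (nat_of_ord b <> 0%N -> nat_of_ord b' <> 0%N ->
       exists (a y c' : 'I_p),
         let chi := fun q : 'I_p => omega p ^+ (c' * q) in
         [/\ ((b' * c' + c) %% p = 0)%N,
             ((y * b) %% p = b')%N,
             inTk p 1 (Smat chi),
             omega p ^+ a *: M' = (M *m Smat chi) ^+ y &
             (nat_of_ord c = 0%N -> omega p ^+ a *: M' = M ^+ y)])].
Proof.
case: p xi xi' b b' c M M' => [|[|n]] xi xi' b b' c M M' pr //.
move=> oP m1 Txi Txi' eM eM' KM KM' hc.
have nxi : forall q, `|xi q| = 1.
  case: Txi => [[f [Sf [nf _]]] _] q.
  by rewrite (mon_inj (etrans (esym (Smat_mon xi)) (etrans Sf (Smat_mon f)))).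
have pxi : \prod_q xi q = 1.
  case: Txi => [[f [Sf [_ pf]]] _]; rewrite -[RHS]pf; apply: eq_bigr => q _.
  exact: (mon_inj (etrans (esym (Smat_mon xi)) (etrans Sf (Smat_mon f)))).
have nxi' : forall q, `|xi' q| = 1.
  case: Txi' => [[f [Sf [nf _]]] _] q.
  by rewrite (mon_inj (etrans (esym (Smat_mon xi')) (etrans Sf (Smat_mon f)))).
have pxi' : \prod_q xi' q = 1.
  case: Txi' => [[f [Sf [_ pf]]] _]; rewrite -[RHS]pf; apply: eq_bigr => q _.
  exact: (mon_inj (etrans (esym (Smat_mon xi')) (etrans Sf (Smat_mon f)))).
have zxi : forall q, xi q != 0 by move=> q; rewrite -normr_eq0 nxi oner_eq0.
have zxi' : forall q, xi' q != 0 by move=> q; rewrite -normr_eq0 nxi' oner_eq0.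
have eMm : M = mon xi b by rewrite eM M_mon.
have eMm' : M' = mon xi' b' by rewrite eM' M_mon.
have uM : M \in unitmx by rewrite eMm mon_unit.
have uM' : M' \in unitmx by rewrite eMm' mon_unit.
have rel : M *m M' = omega n.+2 ^+ c *: (M' *m M).
  have : commut M M' *m M' *m M = M *m M'.
    by rewrite /commut mulmxKV // mulmxKV.
  by rewrite hc mul_scalar_mx -scalemxAl => <-.
have R : forall i, xi i * xi' (i - b) = omega n.+2 ^+ c * (xi' i * xi (i - b')).
  move: rel; rewrite eMm eMm' !mon_mul monZ addrC; exact: mon_inj.
have prw := omega_prim pr.
have wk : forall e, (omega n.+2 ^+ e) ^+ n.+2 = 1.
  by move=> e; rewrite exprAC omega_exp expr1n.
split.
- move=> hb hb'.
  have b0 : b = 0 by apply/val_inj.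
  have b'0 : b' = 0 by apply/val_inj.
  have wc : omega n.+2 ^+ c = 1.
    have := R 0; rewrite b0 b'0 subr0 => h.
    apply: (mulIf (mulf_neq0 (zxi' 0) (zxi 0))).
    by rewrite -h mul1r mulrC.
  split.
  + by rewrite eM hb expr0 mulmx1.
  + by rewrite eM' hb' expr0 mulmx1.
  + have := prim_order_dvd prw c; rewrite wc eqxx => d.
    case: (posnP c) => // c0.
    by have := dvdn_leq c0 d; rewrite leqNgt ltn_ord.
- move=> hb hb'.
  have b'0 : b' = 0 by apply/val_inj.
  have nb : b != 0 by apply/eqP => h; apply: hb; rewrite h.
  have ub := unit_ord pr nb.
  have R2 : forall i, xi' (i - b) = omega n.+2 ^+ c * xi' i.
    move=> i; apply: (mulfI (zxi i)); rewrite R b'0 subr0; ring.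
  have It := iter_shift R2.
  have pw : forall i, xi' i ^+ n.+2 = xi' 0 ^+ n.+2.
    move=> i; have := It (i * b^-1)%R i; rewrite reach // => ->.
    have wk2 : forall e k, ((omega n.+2 ^+ e) ^+ k) ^+ n.+2 = 1.
      by move=> e k; rewrite exprAC wk expr1n.
    by rewrite exprMn wk2 mul1r.
  have p0 : xi' 0 ^+ n.+2 = 1.
    have inj : injective (fun k : 'I_n.+2 => - (b * k)).
      by move=> x z /oppr_inj /(mulrI ub).
    rewrite -[RHS]pxi' [RHS](reindex_inj inj) /=.
    rewrite (eq_bigr (fun k : 'I_n.+2 => omega n.+2 ^+ (c * k) * xi' 0)).
      by rewrite big_split /= prod_omega // mul1r prod_const_ord.
    move=> k _; have := It k 0; rewrite sub0r -mulr_natr natr_Zp exprM => ->.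
    by [].
  have eM'2 : M' = Smat xi' by rewrite eM' hb' expr0 mulmx1.
  split.
    rewrite eM'2; split; first by case: Txi'.
    rewrite expn1 Smat_exp -mon1; apply: mon_ext => i; by rewrite pw p0.
  move=> hc0.
  have cst : forall i, xi' i = xi' 0.
    move=> i; have := It (i * b^-1)%R i.
    by rewrite reach // hc0 expr0 expr1n mul1r => ->.
  have sc : M' = (xi' 0)%:M.
    rewrite eMm' b'0.
    have -> : mon xi' 0 = mon (fun i => xi' 0 * 1) 0.
      by apply: mon_ext => i; rewrite mulr1 cst.
    by rewrite -monZ mon1 scalemx1.
  by split => // B _; rewrite sc scalar_mxC.
move=> hb hb'.
have nb : b != 0 by apply/eqP => h; apply: hb; rewrite h.
have nb' : b' != 0 by apply/eqP => h; apply: hb'; rewrite h.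
have ub := unit_ord pr nb.
have ub' := unit_ord pr nb'.
pose y : 'I_n.+2 := (b' * b^-1)%R.
pose c' : 'I_n.+2 := (- (c * b'^-1))%R.
pose chi := fun q : 'I_n.+2 => omega n.+2 ^+ (c' * q).
have chiE : forall q, chi q = E (c' * q)%R by move=> q; rewrite /chi E_nat.
have chi_add : forall i j, chi (i + j) = chi i * chi j.
  by move=> i j; rewrite !chiE mulrDr E_add.
have chib' : chi (- b') = omega n.+2 ^+ c.
  by rewrite chiE /c' mulrNN divrK.
have zchi : forall q, chi q != 0 by move=> q; rewrite expf_neq0 // omega_neq0.
pose h := fun i => xi i * chi (i - b).
have eN : M *m Smat chi = mon h b by rewrite eMm Smat_mon mon_mul addr0.
have yb : b *+ y = b'.
  by rewrite -mulr_natr natr_Zp /y mulrCA mulrV // mulr1.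
pose H := powf h b y.
have eNy : (M *m Smat chi) ^+ y = mon H b' by rewrite eN mon_exp yb.
have zh : forall i, h i != 0 by move=> i; rewrite mulf_neq0.
have zH : forall i, H i != 0 by move=> i; rewrite powf_neq0.
have C1 : forall i, h i * xi' (i - b) = xi' i * h (i - b').
  move=> i; rewrite /h.
  have e : i - b' - b = (i - b) + - b' by ring.
  rewrite e (chi_add (i - b)) chib'.
  transitivity ((xi i * xi' (i - b)) * chi (i - b)); first ring.
  rewrite R; ring.
have C2 : forall i, h i * H (i - b) = H i * h (i - b').
  move=> i.
  have : mon h b *m mon H b' = mon H b' *m mon h b.
    by rewrite -eNy -eN mulmxE -exprS exprSr.
  by rewrite !mon_mul [b' + b]addrC => /mon_inj; apply.
have cst : forall i, xi' i = xi' 0 / H 0 * H i.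
  pose d := fun i => xi' i / H i.
  have dsh : forall i, d (i - b) = 1 * d i.
    move=> i; rewrite mul1r /d.
    have e1 : xi' (i - b) = xi' i * h (i - b') / h i.
      by rewrite -C1; field; exact: zh.
    have e2 : H (i - b) = H i * h (i - b') / h i.
      by rewrite -C2; field; exact: zh.
    rewrite e1 e2; field.
    by rewrite zh zH zh.
  move=> i; have := iter_shift dsh (i * b^-1)%R i.
  by rewrite reach // expr1n mul1r /d => ->; rewrite divfK.
pose d0 := xi' 0 / H 0.
have wh : \prod_i h i = 1.
  rewrite big_split /= pxi mul1r (wt_shift chi b) /wt.
  exact: prod_omega.
have wH : \prod_i H i = 1.
  by have := wt_powf h b y; rewrite /wt wh expr1n.
have d0P : d0 ^+ n.+2 = 1.
  have := pxi'; rewrite (eq_bigr _ (fun i _ => cst i)) big_split /= wH mulr1.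
  by rewrite prod_const_ord.
have [j dj] := prim_rootP prw d0P.
have wj : E (- j) * E j = 1 by rewrite -E_add addNr /E expr0.
have main : omega n.+2 ^+ (- j)%R *: M' = (M *m Smat chi) ^+ y.
  rewrite eNy eMm' monZ; apply: mon_ext => i.
  rewrite cst -/d0 dj mulrA.
  by move: wj; rewrite /E => ->; rewrite mul1r.
have Schi : inTk n.+2 1 (Smat chi).
  split.
    exists chi; split => //; split.
      by move=> q; rewrite normrX omega_norm expr1n.
    exact: prod_omega.
  rewrite expn1 Smat_exp -mon1; apply: mon_ext => i.
  by rewrite /chi exprAC omega_exp expr1n.
exists (- j)%R, y, c' => /=.
split => //.
- have z : (b' * c' + c = 0)%R by rewrite /c' mulrN mulrCA mulrV // mulr1 addNr.
  by have := congr1 val z => /=; rewrite modnDml.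
- have z : (y * b = b')%R by rewrite /y divrK.
  by have := congr1 val z.
- move=> hc0.
  have c0 : c = 0 by apply/val_inj.
  have c'0 : c' = 0 by rewrite /c' c0 mul0r oppr0.
  have S1 : Smat chi = 1%:M.
    rewrite Smat_mon -mon1; apply: mon_ext => q.
    by rewrite /chi c'0 mul0n expr0.
  by rewrite main S1 mulmx1.
Qed.
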